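(* Let $(X,d,f)$ be a dynamical system and $\mathcal{A}=\{\mathcal{U}_n\}_{n\in\mathbb{N}}$ a defining sequence of $X$, and let $\theta:X\to\varprojlim(\hookrightarrow,\mathcal{O}(\mathcal{U}_n))$ be given by $\theta(x)=\big((\mathcal{U}_n[f^i(x)])_{i\in\mathbb{N}}\big)_{n\in\mathbb{N}}$. (i) If $\mathcal{A}$ is complete, then $\theta$ is a homeomorphism onto $\varprojlim(\hookrightarrow,\mathcal{O}(\mathcal{U}_n))$. (ii) If $\mathcal{A}$ is complete and tame, then $f$ is uniformly continuous if and only if $\theta$ and $\theta^{-1}$ are uniformly continuous.
   Context: Spaces are nonempty separable metrizable; $d$ admissible, $f$ continuous. A partition is a cover by pairwise disjoint nonempty clopen sets; $\mathcal{U}[x]$ is the element containing $x$. A defining sequence is a sequence of partitions, each refining the previous, whose union is a basis; complete if nested $U_n\in\mathcal{U}_n$ have nonempty intersection; tame if $\sup\{\operatorname{diam}O:O\in\mathcal{U}_n\}\to0$ and each $\mathcal{U}_n$ is $\rho_n$-separated for some $\rho_n>0$. $\mathcal{O}(\mathcal{U})=\{(O_i)\in\mathcal{U}^{\mathbb{N}}:\forall k\ \exists x,\ f^i(x)\in O_i\ (0\le i\le k)\}$ with metric $1/(i+1)$ ($i$ least index of disagreement, $\mathcal{U}$ discrete). $\hookrightarrow:\mathcal{O}(\mathcal{U}_{n+1})\to\mathcal{O}(\mathcal{U}_n)$ sends $(O_i)$ to the unique $(V_i)\in\mathcal{U}_n^{\mathbb{N}}$ with $O_i\subseteq V_i$;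 the inverse limit is $\{(y_n)\in\prod_n\mathcal{O}(\mathcal{U}_n):y_n=\hookrightarrow(y_{n+1})\}$ with metric $d_\Pi((y_n),(z_n))=\max_n d(y_n,z_n)/(n+1)$. *)

(* Defs.v *)
From Stdlib Require Import Reals ClassicalEpsilon.
From Coquelicot Require Import Coquelicot.
Open Scope R_scope.

Section Defs.
Context {X : Type}.
Implicit Types (d : X -> X -> R) (A B : X -> Prop).

Definition is_metric d : Prop :=
  (forall x y, 0 <= d x y) /\ (forall x y, d x y = 0 <-> x = y) /\
  (forall x y, d x y = d y x) /\ (forall x y z, d x z <= d x y + d y z).

Definition mopen d A : Prop :=
  forall x, A x -> exists e, 0 < e /\ forall y, d x y < e -> A y.
Definition mclosed d A : Prop := mopen d (fun x => ~ A x).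
Definition clopen d A : Prop := mopen d A /\ mclosed d A.

Definition separable d : Prop :=
  exists s : nat -> X, forall x e, 0 < e -> exists n, d x (s n) < e.

Definition mcontinuous d (f : X -> X) : Prop :=
  forall x e, 0 < e -> exists dl, 0 < dl /\ forall y, d x y < dl -> d (f x) (f y) < e.

Definition unif_continuous d (f : X -> X) : Prop :=
  forall e, 0 < e -> exists dl, 0 < dl /\ forall x y, d x y < dl -> d (f x) (f y) < e.

Definition subset A B : Prop := forall x, A x -> B x.

Definition partition d (U : (X -> Prop) -> Prop) : Prop :=
  (forall O, U O -> (exists x, O x) /\ clopen d O) /\
  (forall O O', U O -> U O' -> O <> O' -> forall x, ~ (O x /\ O' x)) /\
  (forall x, exists O, U O /\ O x).

(* U[x] : the element of U containing x *)
Definition cell (U : (X -> Prop) -> Prop) (x : X) : X -> Prop :=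
  fun y => exists O, U O /\ O x /\ O y.

Definition refines (V U : (X -> Prop) -> Prop) : Prop :=
  forall O, V O -> exists O', U O' /\ subset O O'.

Definition is_basis d (B : (X -> Prop) -> Prop) : Prop :=
  (forall O, B O -> mopen d O) /\
  (forall W x, mopen d W -> W x -> exists O, B O /\ O x /\ subset O W).

Definition defining_sequence d (P : nat -> (X -> Prop) -> Prop) : Prop :=
  (forall n, partition d (P n)) /\
  (forall n, refines (P (S n)) (P n)) /\
  is_basis d (fun O => exists n, P n O).

Definition complete_seq (P : nat -> (X -> Prop) -> Prop) : Prop :=
  forall Us : nat -> X -> Prop, (forall n, P n (Us n)) ->
    (forall n, subset (Us (S n)) (Us n)) -> exists x, forall n, Us n x.

Definition tame d (P : nat -> (X -> Prop) -> Prop) : Prop :=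
  (forall e, 0 < e -> exists N, forall n, (N <= n)%nat ->
      forall O, P n O -> forall x y, O x -> O y -> d x y <= e) /\
  (forall n, exists rho, 0 < rho /\ forall O O', P n O -> P n O' -> O <> O' ->
      forall x y, O x -> O' y -> rho <= d x y).

Definition orbit_space (f : X -> X) (U : (X -> Prop) -> Prop)
  (s : nat -> X -> Prop) : Prop :=
  (forall i, U (s i)) /\
  (forall k, exists x, forall i, (i <= k)%nat -> s i (Nat.iter i f x)).

(* metric on O(U): 1/(i+1), i least index of disagreement; 0 if equal *)
Definition first_diff (s t : nat -> X -> Prop) (i : nat) : Prop :=
  s i <> t i /\ forall j, (j < i)%nat -> s j = t j.

Definition dO (s t : nat -> X -> Prop) : R :=
  match excluded_middle_informative (exists i, first_diff s t i) with
  | left H => / (INR (proj1_sig (constructive_indefinite_description _ H)) + 1)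
  | right _ => 0
  end.

(* y_n = hook(y_{n+1}) : y_n i is the element of U_n containing y_{n+1} i *)
Definition hook_rel (Un : (X -> Prop) -> Prop) (yn yn1 : nat -> X -> Prop) : Prop :=
  forall i, Un (yn i) /\ subset (yn1 i) (yn i).

Definition inv_limit (f : X -> X) (P : nat -> (X -> Prop) -> Prop)
  (y : nat -> nat -> X -> Prop) : Prop :=
  (forall n, orbit_space f (P n) (y n)) /\
  (forall n, hook_rel (P n) (y n) (y (S n))).

(* d_Pi(y,z) = max_n dO(y_n,z_n)/(n+1), written as a supremum (it is attained) *)
Definition dPi (y z : nat -> nat -> X -> Prop) : R :=
  real (Sup_seq (fun n => Finite (dO (y n) (z n) / (INR n + 1)))).

Definition theta (f : X -> X) (P : nat -> (X -> Prop) -> Prop) (x : X)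
  : nat -> nat -> X -> Prop :=
  fun n i => cell (P n) (Nat.iter i f x).

End Defs.

(* Main.v *)
Require Import Defs.
From Stdlib Require Import Reals.
From Coquelicot Require Import Coquelicot.
From Stdlib Require Import Arith Lra Lia Classical FunctionalExtensionality PropExtensionality ClassicalEpsilon.
Open Scope R_scope.

Lemma same_cell {X} d (U : (X->Prop)->Prop) O O' (x : X) :
  partition d U -> U O -> U O' -> O x -> O' x -> O = O'.
Proof.
  intros [_ [Hdis _]] HO HO' Hx Hx'.
  destruct (classic (O = O')) as [E|E]; auto.
  exfalso; exact (Hdis O O' HO HO' E x (conj Hx Hx')).
Qed.

Lemma cell_eq {X} d U (O : X -> Prop) x :
  partition d U -> U O -> O x -> cell U x = O.
Proof.
  intros Hp HO Hx. apply functional_extensionality; intro y.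
  apply propositional_extensionality. split.
  - intros [O' [HO' [Hx' Hy]]].
    rewrite <- (same_cell d U O O' x Hp HO HO' Hx Hx') in Hy. exact Hy.
  - intro Hy. exists O; auto.
Qed.

Lemma cell_in {X} d U (x : X) : partition d U -> U (cell U x) /\ cell U x x.
Proof.
  intros Hp. pose proof Hp as [_ [_ Hc]]. destruct (Hc x) as [O [HO Hx]].
  rewrite (cell_eq d U O x Hp HO Hx). auto.
Qed.

Lemma cell_mem {X} d U (x y : X) : partition d U -> cell U x y -> cell U y = cell U x.
Proof.
  intros Hp H. destruct (cell_in d U x Hp) as [H1 H2].
  apply cell_eq with d; auto.
Qed.

Lemma iter_succ {X} (f : X -> X) i x : Nat.iter i f (f x) = Nat.iter (S i) f x.
Proof. induction i; simpl; auto. simpl in IHi. rewrite IHi. reflexivity. Qed.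

Lemma iter_cont {X} (d : X -> X -> R) f : mcontinuous d f -> forall i, mcontinuous d (Nat.iter i f).
Proof.
  intros Hf i. induction i.
  - intros x e He. exists e; split; auto.
  - intros x e He. simpl.
    destruct (Hf (Nat.iter i f x) e He) as [d1 [Hd1 H1]].
    destruct (IHi x d1 Hd1) as [d2 [Hd2 H2]].
    exists d2; split; auto.
Qed.

Lemma iter_ucont {X} (d : X -> X -> R) f : unif_continuous d f -> forall i, unif_continuous d (Nat.iter i f).
Proof.
  intros Hf i. induction i.
  - intros e He. exists e; split; auto.
  - intros e He. simpl.
    destruct (Hf e He) as [d1 [Hd1 H1]].
    destruct (IHi d1 Hd1) as [d2 [Hd2 H2]].
    exists d2; split; auto.
Qed.

Lemma fin_delta (Q : nat -> R -> Prop) K :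
  (forall j a b, 0 < b <= a -> Q j a -> Q j b) ->
  (forall j, (j <= K)%nat -> exists a, 0 < a /\ Q j a) ->
  exists a, 0 < a /\ forall j, (j <= K)%nat -> Q j a.
Proof.
  intros Hm. induction K; intros H.
  - destruct (H 0%nat (le_n 0)) as [a [Ha HQ]]. exists a; split; auto.
    intros j Hj. assert (j = 0%nat) by lia. subst; auto.
  - destruct IHK as [a [Ha HQ]].
    { intros j Hj. apply H; lia. }
    destruct (H (S K) (le_n _)) as [b [Hb HQb]].
    exists (Rmin a b). split. apply Rmin_pos; auto.
    intros j Hj. destruct (Nat.eq_dec j (S K)) as [->|Hne].
    + apply Hm with b; auto. split; [apply Rmin_pos; auto| apply Rmin_r].
    + apply Hm with a. split; [apply Rmin_pos; auto| apply Rmin_l]. apply HQ; lia.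
Qed.

Lemma chain {X} f P (y : nat -> nat -> X -> Prop) :
  inv_limit f P y -> forall a b i, (a <= b)%nat -> subset (y b i) (y a i).
Proof.
  intros [_ Hh] a b i Hab. induction Hab.
  - intros z Hz; auto.
  - intros z Hz. apply IHHab. destruct (Hh m i) as [_ Hs]. apply Hs. exact Hz.
Qed.

Lemma theta_inv {X} d (f : X -> X) P x :
  (forall n, partition d (P n)) -> (forall n, refines (P (S n)) (P n)) ->
  inv_limit f P (theta f P x).
Proof.
  intros Hpart Href. split.
  - intro n. split.
    + intro i. unfold theta. apply (cell_in d), Hpart.
    + intro k. exists x. intros i _. unfold theta. apply (cell_in d), Hpart.
  - intros n i. split.
    + unfold theta. apply (cell_in d), Hpart.
    + intros z Hz. unfold theta in *.
      destruct (cell_in d (P (S n)) (Nat.iter i f x) (Hpart (S n))) as [H1 H2].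
      destruct (Href n _ H1) as [O' [HO' Hsub]].
      rewrite (cell_eq d (P n) O' (Nat.iter i f x) (Hpart n) HO' (Hsub _ H2)).
      apply Hsub; exact Hz.
Qed.

Lemma fd_unique {X} (s t : nat -> X -> Prop) i j :
  first_diff s t i -> first_diff s t j -> i = j.
Proof.
  intros [Hi Hi'] [Hj Hj']. destruct (lt_eq_lt_dec i j) as [[H|H]|H]; auto.
  - exfalso; apply Hi; apply Hj'; auto.
  - exfalso; apply Hj; apply Hi'; auto.
Qed.

Lemma dO_val {X} (s t : nat -> X -> Prop) i : first_diff s t i -> dO s t = / (INR i + 1).
Proof.
  intros H. unfold dO. destruct (excluded_middle_informative _) as [e|n].
  - destruct (constructive_indefinite_description _ e) as [j Hj]. simpl.
    rewrite (fd_unique s t j i Hj H); reflexivity.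
  - exfalso; apply n; eauto.
Qed.

Lemma dO_none {X} (s t : nat -> X -> Prop) : ~ (exists i, first_diff s t i) -> dO s t = 0.
Proof. intro H. unfold dO; destruct (excluded_middle_informative _); [contradiction|reflexivity]. Qed.

Lemma fd_exists {X} (s t : nat -> X -> Prop) n : s n <> t n -> exists i, first_diff s t i.
Proof.
  pattern n. apply lt_wf_ind. clear n. intros n IH Hn.
  destruct (classic (forall j, (j < n)%nat -> s j = t j)) as [Hall|Hnot].
  - exists n; split; auto.
  - apply not_all_ex_not in Hnot. destruct Hnot as [j Hj].
    apply imply_to_and in Hj. destruct Hj. apply (IH j); auto.
Qed.

Lemma dO_range {X} (s t : nat -> X -> Prop) : 0 <= dO s t <= 1.
Proof.
  unfold dO; destruct (excluded_middle_informative _) as [e|n]; [|lra].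
  destruct (constructive_indefinite_description _ e) as [j Hj]; simpl.
  pose proof (pos_INR j). split.
  - left; apply Rinv_0_lt_compat; lra.
  - rewrite <- Rinv_1. apply Rinv_le_contravar; lra.
Qed.

Lemma dO_agree {X} (s t : nat -> X -> Prop) K :
  (forall j, (j < K)%nat -> s j = t j) -> dO s t <= / (INR K + 1).
Proof.
  intros Hag. pose proof (pos_INR K).
  destruct (classic (exists i, first_diff s t i)) as [[i Hi]|Hn].
  - rewrite (dO_val _ _ i Hi).
    assert (HKi : (K <= i)%nat).
    { destruct (le_lt_dec K i); auto. exfalso; apply (proj1 Hi); auto. }
    apply le_INR in HKi.
    apply Rinv_le_contravar; lra.
  - rewrite dO_none; auto. left; apply Rinv_0_lt_compat; lra.
Qed.

Lemma dO_lt1 {X} (s t : nat -> X -> Prop) : dO s t < 1 -> s 0%nat = t 0%nat.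
Proof.
  intro H. destruct (classic (s 0%nat = t 0%nat)) as [E|E]; auto.
  rewrite (dO_val s t 0) in H.
  - simpl in H. replace (0 + 1) with 1 in H by lra. rewrite Rinv_1 in H; lra.
  - split; auto; intros; lia.
Qed.

Lemma dO_shift {X} (s t : nat -> X -> Prop) :
  dO (fun i => s (S i)) (fun i => t (S i)) <= 2 * dO s t.
Proof.
  destruct (classic (exists j, first_diff (fun i => s (S i)) (fun i => t (S i)) j)) as [[j Hj]|Hn].
  - rewrite (dO_val _ _ j Hj).
    destruct (fd_exists s t (S j) (proj1 Hj)) as [i Hi].
    rewrite (dO_val _ _ i Hi).
    assert (Hij : (i <= S j)%nat).
    { destruct (le_lt_dec i (S j)); auto. exfalso. apply (proj1 Hj). apply (proj2 Hi); lia. }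
    apply le_INR in Hij. rewrite S_INR in Hij.
    pose proof (pos_INR i). pose proof (pos_INR j).
    set (a := INR j + 1). set (b := INR i + 1).
    assert (Ha : 0 < a) by (unfold a; lra). assert (Hb : 0 < b) by (unfold b; lra).
    assert (E1 : / a = b * (/ a * / b)) by (field; lra).
    assert (E2 : 2 * / b = 2 * a * (/ a * / b)) by (field; lra).
    rewrite E1, E2. apply Rmult_le_compat_r.
    + left. apply Rmult_lt_0_compat; apply Rinv_0_lt_compat; lra.
    + unfold a, b; lra.
  - rewrite dO_none; auto. pose proof (dO_range s t); lra.
Qed.

Lemma sup_facts (u : nat -> R) c : (forall n, 0 <= u n <= c) ->
  (forall n, u n <= real (Sup_seq (fun n => Finite (u n)))) /\
  real (Sup_seq (fun n => Finite (u n))) <= c.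
Proof.
  intros Hu.
  assert (H1 : Rbar_le (Sup_seq (fun n => Finite (u n))) (Finite c)).
  { apply Rbar_le_trans with (Sup_seq (fun _ => Finite c)).
    - apply Sup_seq_le; intro n; simpl; apply Hu.
    - rewrite (is_sup_seq_unique (fun _ => Finite c) (Finite c)).
      + apply Rbar_le_refl.
      + intro eps. pose proof (cond_pos eps). split.
        * intro n; simpl; lra.
        * exists 0%nat; simpl; lra. }
  assert (H2 : forall n, Rbar_le (Finite (u n)) (Sup_seq (fun n => Finite (u n)))).
  { intro n. apply Sup_seq_minor_le with n. apply Rbar_le_refl. }
  revert H1 H2. generalize (Sup_seq (fun n => Finite (u n))). intros [s| |] H1 H2; simpl in *.
  - split; auto.
  - contradiction.
  - exfalso; exact (H2 0%nat).
Qed.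

Lemma term_range {X} (s t : nat -> X -> Prop) n : 0 <= dO s t / (INR n + 1) <= 1.
Proof.
  pose proof (dO_range s t); pose proof (pos_INR n).
  assert (0 < /(INR n+1) <= 1).
  { split. apply Rinv_0_lt_compat; lra. rewrite <- Rinv_1; apply Rinv_le_contravar; lra. }
  unfold Rdiv; split; [apply Rmult_le_pos; lra | ].
  apply Rle_trans with (1 * /(INR n+1)); [apply Rmult_le_compat_r; lra | lra].
Qed.

Lemma dPi_ge {X} (y z : nat -> nat -> X -> Prop) n : dO (y n) (z n) / (INR n + 1) <= dPi y z.
Proof.
  unfold dPi.
  destruct (sup_facts (fun n => dO (y n) (z n) / (INR n + 1)) 1) as [H _].
  - intro m; apply term_range.
  - apply H.
Qed.

Lemma dPi_le {X} (y z : nat -> nat -> X -> Prop) c :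
  (forall n, dO (y n) (z n) / (INR n + 1) <= c) -> dPi y z <= c.
Proof.
  intro Hc. unfold dPi.
  destruct (sup_facts (fun n => dO (y n) (z n) / (INR n + 1)) c) as [_ H].
  - intro m; split; [apply term_range| apply Hc].
  - apply H.
Qed.

Lemma dPi_small {X} (y z : nat -> nat -> X -> Prop) K :
  (forall n i, (n < K)%nat -> (i < K)%nat -> y n i = z n i) -> dPi y z <= / (INR K + 1).
Proof.
  intros H. apply dPi_le. intro n.
  pose proof (pos_INR n). pose proof (pos_INR K).
  assert (Hi : 0 < /(INR n+1) <= 1).
  { split. apply Rinv_0_lt_compat; lra. rewrite <- Rinv_1; apply Rinv_le_contravar; lra. }
  pose proof (dO_range (y n) (z n)).
  unfold Rdiv. destruct (lt_dec n K) as [Hn|Hn].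
  - pose proof (dO_agree (y n) (z n) K (fun j Hj => H n j Hn Hj)).
    apply Rle_trans with (dO (y n) (z n) * 1).
    + apply Rmult_le_compat_l; lra.
    + lra.
  - apply Rle_trans with (1 * / (INR n + 1)).
    + apply Rmult_le_compat_r; lra.
    + rewrite Rmult_1_l. apply Rinv_le_contravar; [lra|].
      assert (K <= n)%nat by lia. apply le_INR in H3. lra.
Qed.

Lemma dPi_lt_level {X} (y z : nat -> nat -> X -> Prop) n :
  dPi y z < / (INR n + 1) -> y n 0%nat = z n 0%nat.
Proof.
  intro H. pose proof (dPi_ge y z n). apply dO_lt1.
  pose proof (pos_INR n).
  assert (Hp : 0 < / (INR n + 1)) by (apply Rinv_0_lt_compat; lra).
  apply Rmult_lt_reg_r with (/ (INR n + 1)); auto.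
  unfold Rdiv in H0. lra.
Qed.

Lemma dPi_shift {X} (f : X -> X) P x x' :
  dPi (theta f P (f x)) (theta f P (f x')) <= 2 * dPi (theta f P x) (theta f P x').
Proof.
  apply dPi_le. intro n.
  assert (Eq : forall w, theta f P (f w) n = (fun i => theta f P w n (S i))).
  { intro w. unfold theta; apply functional_extensionality; intro i.
    rewrite iter_succ; reflexivity. }
  rewrite !Eq. pose proof (pos_INR n).
  assert (Hp : 0 < / (INR n + 1)) by (apply Rinv_0_lt_compat; lra).
  apply Rle_trans with (2 * dO (theta f P x n) (theta f P x' n) / (INR n + 1)).
  - unfold Rdiv; apply Rmult_le_compat_r; [lra | apply (dO_shift (theta f P x n) (theta f P x' n))].
  - replace (2 * dO (theta f P x n) (theta f P x' n) / (INR n + 1))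
      with (2 * (dO (theta f P x n) (theta f P x' n) / (INR n + 1))) by (unfold Rdiv; ring).
    apply Rmult_le_compat_l; [lra| apply dPi_ge].
Qed.

Lemma ball_open {X} (d : X -> X -> R) x r : is_metric d -> mopen d (fun y => d x y < r).
Proof.
  intros [_ [_ [_ Htri]]] y Hy. exists (r - d x y). split; [lra|].
  intros z Hz. pose proof (Htri x y z). lra.
Qed.

Lemma archK e : 0 < e -> exists K, (0 < K)%nat /\ / (INR K + 1) < e.
Proof.
  intro He. destruct (archimed_cor1 e He) as [K [HK HK0]]. exists K. split; auto.
  apply lt_0_INR in HK0.
  apply Rlt_trans with (/ INR K); auto.
  apply Rinv_lt_contravar; [nra| lra].
Qed.

Theorem proposition4p12 (X : Type) (d : X -> X -> R) (f : X -> X)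
  (P : nat -> (X -> Prop) -> Prop)
  (Xne : inhabited X) (Hd : is_metric d) (Hsep : separable d)
  (Hf : mcontinuous d f) (HP : defining_sequence d P) :
  (complete_seq P ->
     (* theta maps X into the inverse limit, and is a homeomorphism onto it *)
     (forall x, inv_limit f P (theta f P x)) /\
     (forall x x', theta f P x = theta f P x' -> x = x') /\
     (forall y, inv_limit f P y -> exists x, theta f P x = y) /\
     (forall x e, 0 < e -> exists dl, 0 < dl /\
        forall x', d x x' < dl -> dPi (theta f P x) (theta f P x') < e) /\
     (forall x e, 0 < e -> exists dl, 0 < dl /\
        forall x', dPi (theta f P x) (theta f P x') < dl -> d x x' < e)) /\
  (complete_seq P -> tame d P ->
     (unif_continuous d f <->
       ((forall e, 0 < e -> exists dl, 0 < dl /\ forall x x',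
            d x x' < dl -> dPi (theta f P x) (theta f P x') < e) /\
        (forall e, 0 < e -> exists dl, 0 < dl /\ forall x x',
            dPi (theta f P x) (theta f P x') < dl -> d x x' < e)))).
Proof.
  destruct HP as [Hpart [Href [Hbopen Hbasis]]].
  pose proof Hd as [Hpos [Hzero [Hsym Htri]]].
  assert (Hdxx : forall x, d x x = 0) by (intro x; apply Hzero; reflexivity).
  split.
  - intro Hc. split; [|split; [|split; [|split]]].
    + intro x. apply theta_inv with d; auto.
    + intros x x' E. destruct (classic (x = x')) as [|Hne]; auto. exfalso.
      assert (Hdp : 0 < d x x').
      { destruct (Hpos x x') as [H|H]; auto. exfalso; apply Hne; apply Hzero; auto. }
      destruct (Hbasis (fun y => d x y < d x x') x (ball_open d x _ Hd))
        as [O [[n HnO] [HOx HOsub]]].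
      { simpl. rewrite Hdxx. exact Hdp. }
      assert (E' := f_equal (fun g => g n 0%nat) E). simpl in E'. unfold theta in E'. simpl in E'.
      rewrite (cell_eq d (P n) O x (Hpart n) HnO HOx) in E'.
      destruct (cell_in d (P n) x' (Hpart n)) as [_ Hx'].
      rewrite <- E' in Hx'. apply HOsub in Hx'. simpl in Hx'. lra.
    + intros y Hy. pose proof Hy as [Horb Hh].
      destruct (Hc (fun n => y n 0%nat) (fun n => proj1 (Horb n) 0%nat)
                   (fun n => proj2 (Hh n 0%nat))) as [x Hx].
      exists x. apply functional_extensionality; intro n;
        apply functional_extensionality; intro i.
      unfold theta. apply cell_eq with d; [apply Hpart| apply (proj1 (Horb n) i) | ].
      destruct (cell_in d (P n) (Nat.iter i f x) (Hpart n)) as [HV HVx].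
      destruct (proj1 (Hpart n) _ HV) as [_ [HVo _]].
      destruct (HVo _ HVx) as [e [He HeV]].
      destruct (iter_cont d f Hf i x e He) as [dl [Hdl Hdl']].
      destruct (Hbasis (fun z => d x z < dl) x (ball_open d x dl Hd))
        as [O [[m HmO] [HOx HOsub]]].
      { simpl; rewrite Hdxx; auto. }
      assert (Eym : y m 0%nat = O).
      { apply (same_cell d (P m) (y m 0%nat) O x (Hpart m) (proj1 (Horb m) 0%nat) HmO (Hx m) HOx). }
      destruct (proj2 (Horb (Nat.max m n)) i) as [z Hz].
      assert (Hz0 := Hz 0%nat (Nat.le_0_l _)). assert (Hzi := Hz i (le_n _)). simpl in Hz0.
      assert (HzO : O z).
      { rewrite <- Eym; apply (chain f P y Hy m (Nat.max m n) 0); [lia| exact Hz0]. }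
      assert (HVz : cell (P n) (Nat.iter i f x) (Nat.iter i f z)).
      { apply HeV, Hdl', HOsub, HzO. }
      assert (Hyz : y n i (Nat.iter i f z)).
      { apply (chain f P y Hy n (Nat.max m n) i); [lia|exact Hzi]. }
      rewrite (same_cell d (P n) (y n i) (cell (P n) (Nat.iter i f x)) (Nat.iter i f z)
                 (Hpart n) (proj1 (Horb n) i) HV Hyz HVz). exact HVx.
    + intros x e He. destruct (archK e He) as [K [_ HK]].
      destruct (fin_delta (fun n dl => forall i, (i <= K)%nat -> forall x', d x x' < dl ->
                  cell (P n) (Nat.iter i f x') = cell (P n) (Nat.iter i f x)) K) as [dl [Hdl HQ]].
      { intros j a b Hab H i Hi x' Hx'. apply H; auto; lra. }
      { intros n Hn.
        destruct (fin_delta (fun i dl => forall x', d x x' < dl ->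
                  cell (P n) (Nat.iter i f x') = cell (P n) (Nat.iter i f x)) K) as [a [Ha Hq]].
        { intros j a b Hab H x' Hx'. apply H; lra. }
        { intros i Hi. destruct (cell_in d (P n) (Nat.iter i f x) (Hpart n)) as [HV HVx].
          destruct (proj1 (Hpart n) _ HV) as [_ [HVo _]].
          destruct (HVo _ HVx) as [e1 [He1 H1]].
          destruct (iter_cont d f Hf i x e1 He1) as [dl [Hdl Hdl']].
          exists dl; split; auto.
          intros x' Hx'. apply cell_mem with d; auto. }
        exists a; split; auto. }
      exists dl; split; auto. intros x' Hx'.
      apply Rle_lt_trans with (/(INR K+1)); auto. apply dPi_small.
      intros n i Hn Hi. unfold theta. symmetry. apply HQ; auto; lia.
    + intros x e He.
      destruct (Hbasis (fun z => d x z < e) x (ball_open d x e Hd)) as [O [[n HnO] [HOx HOsub]]].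
      { simpl; rewrite Hdxx; auto. }
      exists (/(INR n + 1)). split.
      { apply Rinv_0_lt_compat; pose proof (pos_INR n); lra. }
      intros x' H. apply dPi_lt_level in H. unfold theta in H. simpl in H.
      rewrite (cell_eq d (P n) O x (Hpart n) HnO HOx) in H.
      destruct (cell_in d (P n) x' (Hpart n)) as [_ Hx']. rewrite <- H in Hx'.
      apply HOsub in Hx'. exact Hx'.
  - intros Hc [Hdiam Hsepar].
    assert (Hinv : forall e, 0 < e -> exists dl, 0 < dl /\ forall x x',
               dPi (theta f P x) (theta f P x') < dl -> d x x' < e).
    { intros e He. destruct (Hdiam (e/2)) as [N HN]; [lra|].
      exists (/(INR N+1)). split.
      { apply Rinv_0_lt_compat; pose proof (pos_INR N); lra. }
      intros x x' H. apply dPi_lt_level in H. unfold theta in H; simpl in H.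
      destruct (cell_in d (P N) x (Hpart N)) as [Hc1 Hc2].
      destruct (cell_in d (P N) x' (Hpart N)) as [_ Hc3]. rewrite <- H in Hc3.
      pose proof (HN N (le_n _) _ Hc1 x x' Hc2 Hc3). lra. }
    split.
    + intro Huc. split; [|exact Hinv]. intros e He. destruct (archK e He) as [K [_ HK]].
      destruct (fin_delta (fun n dl => forall i, (i <= K)%nat -> forall x x', d x x' < dl ->
                  cell (P n) (Nat.iter i f x') = cell (P n) (Nat.iter i f x)) K) as [dl [Hdl HQ]].
      { intros j a b Hab H i Hi x x' Hx'. apply H; auto; lra. }
      { intros n Hn.
        destruct (fin_delta (fun i dl => forall x x', d x x' < dl ->
                  cell (P n) (Nat.iter i f x') = cell (P n) (Nat.iter i f x)) K) as [a [Ha Hq]].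
        { intros j a b Hab H x x' Hx'. apply H; lra. }
        { intros i Hi. destruct (Hsepar n) as [rho [Hrho Hr]].
          destruct (iter_ucont d f Huc i rho Hrho) as [dl [Hdl Hdl']].
          exists dl; split; auto. intros x x' Hx'.
          destruct (classic (cell (P n) (Nat.iter i f x') = cell (P n) (Nat.iter i f x))) as [E|E];
            auto. exfalso.
          destruct (cell_in d (P n) (Nat.iter i f x) (Hpart n)) as [HV HVx].
          destruct (cell_in d (P n) (Nat.iter i f x') (Hpart n)) as [HV' HVx'].
          pose proof (Hr _ _ HV HV' (fun H => E (eq_sym H)) _ _ HVx HVx').
          pose proof (Hdl' x x' Hx'). lra. }
        exists a; split; auto. }
      exists dl; split; auto. intros x x' Hx'.
      apply Rle_lt_trans with (/(INR K+1)); auto. apply dPi_small.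
      intros n i Hn Hi. unfold theta. symmetry. apply HQ; auto; lia.
    + intros [Hth _] e He. destruct (Hinv e He) as [dl1 [Hdl1 H1]].
      destruct (Hth (dl1/2)) as [dl2 [Hdl2 H2]]; [lra|].
      exists dl2; split; auto. intros x x' Hx. apply H1.
      pose proof (dPi_shift f P x x'). pose proof (H2 x x' Hx). lra.
Qed.
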